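(* Let $f:X\to\mathrm{SP}(Y)$ be a based multivalued function and $\Sigma f:=\mathrm{id}_{S^1}\triangle f:\Sigma X\to\mathrm{SP}(\Sigma Y)$. For a based space $Z$ let $s_Z:\widetilde{H}^*(Z)\to\widetilde{H}^{*+1}(\Sigma Z)$ be the suspension isomorphism. Then $(\Sigma f)^*\circ s_Y=s_X\circ f^*$ as maps $\widetilde{H}^*(Y)\to\widetilde{H}^{*+1}(\Sigma X)$.
   Context: $\Sigma X=S^1\wedge X$ is the reduced suspension. For a based space $(X,e)$, $\mathrm{SP}(X)$ is the free unital abelian monoid on $X$ with identity $e$, with inclusion $\iota_X:X\to\mathrm{SP}(X)$; $\mathrm{id}_{S^1}$ is regarded as the multivalued function $\iota_{S^1}:S^1\to\mathrm{SP}(S^1)$. For based multivalued functions $f:A\to\mathrm{SP}(B)$, $g:C\to\mathrm{SP}(D)$, $f\triangle g:A\wedge C\to\mathrm{SP}(B\wedge D)$ sends $(a,c)$ to $\sum_{i,j}(b_i,d_j)$ where $f(a)=\sum_i b_i$, $g(c)=\sum_j d_j$. Identify $\widetilde{H}^n(Y)=[Y,\mathrm{SP}(S^n)]_*$; for $\alpha:Y\to\mathrm{SP}(S^n)$ let $\widetilde\alpha:\mathrm{SP}(Y)\to\mathrm{SP}(S^n)$ be its unique continuous homomorphic extension, and for a based map $f:X\to\mathrm{SP}(Y)$ set $f^*[\alpha]=[\widetilde\alpha\circ f]$. *)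

(* Defs.v *)
From HB Require Import structures.
From mathcomp Require Import all_boot all_order all_algebra finmap.
From mathcomp Require Import all_classical all_reals all_analysis.
From mathcomp Require multiset.

Set Implicit Arguments.
Unset Strict Implicit.
Unset Printing Implicit Defensive.

Import Order.TTheory GRing.Theory Num.Theory.
Import numFieldNormedType.Exports.
Local Open Scope classical_set_scope.
Local Open Scope ring_scope.

(* open.  With a single surjection this is the quotient topology.           *)
Definition final_top (I : Type) (S : I -> topologicalType) (T : choiceType)
  (g : forall i, S i -> T) : Type := T.

Section final_topology.
Context (I : Type) (S : I -> topologicalType) (T : choiceType)
  (g : forall i, S i -> T).
Local Notation F := (@final_top I S T g).
HB.instance Definition _ := Choice.on F.

Definition final_open (U : set F) := forall i : I, open (@g i @^-1` U).

Program Definition final_topologicalType_mixin :=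
  @isOpenTopological.Build F final_open _ _ _.
Next Obligation. by move=> i; rewrite preimage_setT; exact: openT. Qed.
Next Obligation.
by move=> A B oA oB i; rewrite preimage_setI; apply: openI; [exact: oA|exact: oB].
Qed.
Next Obligation.
move=> J f of_ i; rewrite preimage_bigcup; apply: bigcup_open => j _.
exact: of_.
Qed.
HB.instance Definition _ := final_topologicalType_mixin.
End final_topology.

(* Smash product A /\ C = (A * C) / (A v C), with the quotient topology;    *)
(* carrier: None = base point, Some (a, c) with a, c both non-base.         *)
Section smash_product.
Context (A C : ptopologicalType).

Definition smash_carrier : choiceType :=
  option {p : A * C | (p.1 != point) && (p.2 != point)}.

Definition smash_q (p : A * C) : smash_carrier := insub p.

Definition smash : Type :=
  @final_top unit (fun _ => (A * C)%type) smash_carrier (fun _ => smash_q).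
HB.instance Definition _ := Topological.on smash.
HB.instance Definition _ := isPointed.Build smash (None : smash_carrier).
End smash_product.

(* SP(X): the free unital abelian monoid on X with identity the base point *)
(* e; carrier: finite multisets on X not containing e.  Topology: the      *)
(* colimit topology, final for the maps X^n -> SP(X), (x_i) |-> sum_i x_i. *)
Section symmetric_product.
Context (X : ptopologicalType).

Definition SP_carrier : choiceType :=
  {m : multiset.multiset X | m point == 0%N}.

Lemma SP_zero_proof : (multiset.mset0 : multiset.multiset X) point == 0%N.
Proof. by rewrite multiset.mset0E. Qed.

Definition sp0 : SP_carrier := exist _ multiset.mset0 SP_zero_proof.

Definition spadd (a b : SP_carrier) : SP_carrier :=
  insubd sp0 (multiset.msetD (val a) (val b)).

Definition spsum (s : seq SP_carrier) : SP_carrier := foldr spadd sp0 s.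

(* the inclusion iota_X : X -> SP(X), with iota_X e = identity *)
Definition spi (x : X) : SP_carrier := insubd sp0 (multiset.msetn 1 x).

Definition spelems (m : SP_carrier) : seq X := multiset.enum_mset (val m).

Definition sp_proj (n : nat) (v : {ptws 'I_n -> X}) : SP_carrier :=
  spsum [seq spi (v i) | i <- enum 'I_n].

Definition SP : Type :=
  @final_top nat (fun n => {ptws 'I_n -> X}) SP_carrier sp_proj.
HB.instance Definition _ := Topological.on SP.
HB.instance Definition _ := isPointed.Build SP (sp0 : SP_carrier).
End symmetric_product.

Arguments spi {X}.

Definition sp_ext (Y Z : ptopologicalType) (alpha : Y -> SP Z) : SP Y -> SP Z :=
  fun m => spsum [seq (alpha y : SP_carrier Z) | y <- spelems (m : SP_carrier Y)].

(* f^* on representatives: alpha |-> alpha~ o f *)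
Definition mv_pull (X Y Z : ptopologicalType) (f : X -> SP Y) (alpha : Y -> SP Z)
  : X -> SP Z := sp_ext alpha \o f.

Definition mv_smash (A B C D : ptopologicalType) (f : A -> SP B) (g : C -> SP D)
  : smash A C -> SP (smash B D) :=
  fun z => match (z : smash_carrier A C) with
  | None => sp0 (smash B D)
  | Some p =>
      spsum [seq spi (smash_q (b, d) : smash B D)
            | b <- spelems (f (val p).1 : SP_carrier B),
              d <- spelems (g (val p).2 : SP_carrier D)]
  end.

(* S^1 = R / Z (quotient topology), based at 0; Sigma X = S^1 /\ X;          *)
Section circle.
Context (R : realType).

Definition circle_carrier : choiceType := {x : R | (0 <= x) && (x < 1)}.

Lemma circle_zero_proof : (0 <= (0 : R)) && ((0 : R) < 1).
Proof. by rewrite lexx ltr01. Qed.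

Definition circle0 : circle_carrier := exist _ 0 circle_zero_proof.

Definition circle_q (x : R) : circle_carrier :=
  insubd circle0 (x - (Num.floor x)%:~R).

Definition circle : Type :=
  @final_top unit (fun _ => (R : topologicalType)) circle_carrier (fun _ => circle_q).
HB.instance Definition _ := Topological.on circle.
HB.instance Definition _ := isPointed.Build circle (circle0 : circle_carrier).
End circle.

Definition sphere0 : Type := bool.
HB.instance Definition _ := Topological.copy sphere0 bool.
HB.instance Definition _ := isPointed.Build sphere0 false.

Fixpoint sphere (R : realType) (n : nat) : ptopologicalType :=
  match n with
  | 0 => sphere0
  | n'.+1 => smash (circle R) (sphere R n')
  end.

Definition susp (R : realType) (X : ptopologicalType) : ptopologicalType :=
  smash (circle R) X.

Definition susp_mv (R : realType) (X Y : ptopologicalType) (f : X -> SP Y)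
  : susp R X -> SP (susp R Y) := mv_smash (@spi (circle R)) f.

Arguments susp_mv R {X Y} f _.

(* suspension isomorphism on representatives:
   s_Z [alpha] = [id_{S^1} /\triangle alpha], alpha : Z -> SP(S^n) *)
Definition susp_coh (R : realType) (n : nat) (Z : ptopologicalType)
  (alpha : Z -> SP (sphere R n)) : susp R Z -> SP (sphere R n.+1) :=
  mv_smash (@spi (circle R)) alpha.
Arguments susp_coh R n {Z} alpha _.

Definition based_map (Y Z : ptopologicalType) (g : Y -> Z) : Prop :=
  continuous g /\ g point = point.

Definition based_homotopic (R : realType) (Y Z : ptopologicalType)
  (g h : Y -> Z) : Prop :=
  exists H : R * Y -> Z,
    [/\ {within [set p : R * Y | p.1 \in `[0, 1]], continuous H},
        (forall y, H (0, y) = g y),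
        (forall y, H (1, y) = h y) &
        (forall t, t \in `[0, 1] -> H (t, point) = point)].

Definition hclass (R : realType) (Y Z : ptopologicalType) (g : Y -> Z)
  : set (Y -> Z) :=
  [set h | based_map h /\ based_homotopic R h g].

(* Main.v *)
Require Import Defs.
From HB Require Import structures.
From mathcomp Require Import all_boot all_order all_algebra finmap.
From mathcomp Require Import all_classical all_reals all_analysis.
From mathcomp Require multiset.

Set Implicit Arguments.
Unset Strict Implicit.
Unset Printing Implicit Defensive.

Section Aux.
Context (K : ptopologicalType).

Lemma val_spadd (a b : SP_carrier K) :
  val (spadd a b) = multiset.msetD (val a) (val b).
Proof.
rewrite /spadd val_insubd multiset.msetE2 (eqP (valP a)) (eqP (valP b)) /=.
by [].
Qed.

Lemma perm_enum_msetD (A B : multiset.multiset K) :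
  perm_eq (multiset.enum_mset (multiset.msetD A B))
          (multiset.enum_mset A ++ multiset.enum_mset B).
Proof.
by apply/allP => a _ /=; rewrite count_cat !multiset.count_mem_mset multiset.msetE2.
Qed.

Lemma sum_enum_spsum (G : K -> nat) (s : seq (SP_carrier K)) :
  \sum_(e <- multiset.enum_mset (val (spsum s))) G e
  = \sum_(m <- s) \sum_(e <- multiset.enum_mset (val m)) G e.
Proof.
elim: s => [|m s IH] /=; first by rewrite big_nil multiset.enum_mset0 big_nil.
by rewrite big_cons -IH val_spadd (perm_big _ (perm_enum_msetD _ _)) big_cat.
Qed.

Lemma val_spsum (s : seq (SP_carrier K)) w :
  val (spsum s) w = \sum_(m <- s) val m w.
Proof.
elim: s => [|m s IH] /=; first by rewrite big_nil multiset.mset0E.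
by rewrite big_cons val_spadd multiset.msetE2 IH.
Qed.

Lemma enum_spi (y : K) :
  multiset.enum_mset (val (spi y)) = if y == point then [::] else [:: y].
Proof.
rewrite /spi val_insubd multiset.msetnE.
have [->|ne] := eqVneq y point; first by rewrite /= multiset.enum_mset0 ?eqxx.
by rewrite /= multiset.enum_msetn.
Qed.

Lemma spelems_neq (m : SP_carrier K) d :
  d \in multiset.enum_mset (val m) -> d != point.
Proof.
move=> H; apply/eqP => eq; move: H; rewrite eq.
by rewrite -has_pred1 has_count multiset.count_mem_mset (eqP (valP m)).
Qed.

End Aux.


Lemma val_sp_ext (Y Z : ptopologicalType) (G : Y -> SP Z) (m : SP Y) w :
  val (sp_ext G m : SP_carrier Z) w
  = \sum_(y <- multiset.enum_mset (val (m : SP_carrier Y))) val (G y : SP_carrier Z) w.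
Proof. by rewrite /sp_ext val_spsum big_map. Qed.

Lemma sum_enum_spi (K : ptopologicalType) (G : K -> nat) (G0 : G point = 0) y :
  \sum_(e <- multiset.enum_mset (val (spi y))) G e = G y.
Proof.
rewrite enum_spi; have [->|_] := eqVneq y point; first by rewrite big_nil G0.
by rewrite big_seq1.
Qed.

Lemma val_mv_smash (A B C D : ptopologicalType) (f : A -> SP B) (g : C -> SP D)
  (a : A) (c : C) (pf : ((a, c).1 != point) && ((a, c).2 != point)) w :
  val (mv_smash f g (Some (exist _ (a, c) pf) : smash_carrier A C) : SP_carrier _) w
  = \sum_(b <- multiset.enum_mset (val (f a : SP_carrier B)))
      \sum_(d <- multiset.enum_mset (val (g c : SP_carrier D)))
         val (spi (smash_q (b, d) : smash B D)) w.
Proof. by rewrite /mv_smash /= val_spsum big_allpairs_dep. Qed.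

Lemma mv_smash_Some (A B C D : ptopologicalType) (f : A -> SP B) (g : C -> SP D) p :
  mv_smash f g (Some p : smash_carrier A C) =
  spsum [seq spi (smash_q (b, d) : smash B D)
            | b <- spelems (f (val p).1 : SP_carrier B),
              d <- spelems (g (val p).2 : SP_carrier D)].
Proof. by []. Qed.

Theorem corollary1p4 (R : realType) (X Y : ptopologicalType)
  (f : X -> SP Y) (hf : based_map f)
  (n : nat) (alpha : Y -> SP (sphere R n)) (halpha : based_map alpha) :
  hclass R (mv_pull (susp_mv R f) (susp_coh R n alpha))
  = hclass R (susp_coh R n (mv_pull f alpha)).
Proof.
suff -> : mv_pull (susp_mv R f) (susp_coh R n alpha)
  = susp_coh R n (mv_pull f alpha) by [].
apply: funext => z.
apply: (@val_inj _ _ (SP_carrier (sphere R n.+1))).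
apply/multiset.msetP => w.
case: z => [p|]; last first.
  by rewrite /mv_pull /sp_ext /= /spelems multiset.enum_mset0 /= multiset.mset0E.
rewrite /mv_pull /=.
rewrite val_sp_ext.
rewrite /spelems sum_enum_spsum big_allpairs_dep val_spsum big_allpairs_dep.
apply: eq_big_seq => b hb.
rewrite /sp_ext sum_enum_spsum big_map.
apply: eq_big_seq => d hd.
have hb' := spelems_neq hb; have hd' := spelems_neq hd.
rewrite (@sum_enum_spi _ (fun e => val (susp_coh R n alpha e : SP_carrier _) w)); last first.
  by rewrite /= multiset.mset0E.
have pf : ((b, d).1 != point) && ((b, d).2 != point) by rewrite /= hb' hd'.
rewrite /smash_q; case: insubP => [u _ hu|]; last by rewrite pf.
rewrite /susp_coh mv_smash_Some hu /= val_spsum big_allpairs_dep.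
by rewrite /spelems enum_spi (negbTE hb') big_seq1.
Qed.
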